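(* Let $\mathcal{T}=(T_n)_{n\in\mathbb{N}}$ be a scale with sequence of factors $(\kappa_n)_{n\in\mathbb{N}}$. Then there is a rational $\mathcal{T}$-sparsely long tail $R_\infty\subset\mathbb{N}$ with $0<d(R_\infty)<1$.
   Context: A scale is a sequence of positive integers $\mathcal{T}=(T_n)_{n\in\mathbb{N}}$ together with a sequence of integers (factors) $(\kappa_n)_{n\in\mathbb{N}}$ such that $\kappa_0=3$, $\kappa_n$ is a multiple of $3\kappa_{n-1}$ for $n\ge1$, $T_0$ is a multiple of $3$, $T_n=\kappa_nT_{n-1}$ for $n\ge1$, and $\kappa_{n+1}/\kappa_n\to\infty$. An $\mathbb{N}$-interval is $[a,b]_{\mathbb{N}}=[a,b]\cap\mathbb{N}$. A component of $\mathbb{M}\subset\mathbb{N}$ is a maximal $\mathbb{N}$-interval contained in $\mathbb{M}$. For $T\ge1$, a $T$-regular interval is $[kT,(k+1)T-1]_{\mathbb{N}}$ for some $k\ge0$. $R_\infty\subset\mathbb{N}$ is $\mathcal{T}$-adapted if each component of $R_\infty$ is a $T_n$-regular interval for some $n$; its $n$-skeleton $R_n$ is the union of the components of $R_\infty$ that are $T_k$-regular for some $k\ge n$. $R_\infty$ is a $\mathcal{T}$-sparsely long tail if: (1) it is $\mathcal{T}$-adapted; (2) $0\notin R_\infty$; (3) for every $n\ge1$ and every $T_n$-regular interval $I=[a,b]_{\mathbb{N}}$ not contained in $R_\infty$ (equivalently not contained in $R_n$), one has $I\cap R_{n-1}\subset[a+T_n/3,\,b-T_n/3]_{\mathbb{N}}$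 and $0<\#(R_{n-1}\cap I)/T_n\le1/\kappa_n$. For $A\subset\mathbb{Z}$, $\bar d(A)=\limsup_{N}\frac1N\#(A\cap[0,N-1])$, $d(A)$ the density when $\limsup=\liminf$. An arithmetic progression is $a\mathbb{Z}+b$ ($a,b\in\mathbb{N}$, $a\ne0$); $A\subset\mathbb{Z}$ is rational if for every $\varepsilon>0$ there is a finite union $B$ of arithmetic progressions with $\bar d(A\triangle B)<\varepsilon$; $A\subset\mathbb{N}$ is rational if $A=C\cap\mathbb{N}$ for a rational $C\subset\mathbb{Z}$. A rational $\mathcal{T}$-sparsely long tail is a set that is both. *)

(* Defs.v *)
From Stdlib Require Import Reals ZArith Arith List.

Definition is_scale (T kappa : nat -> nat) : Prop :=
  kappa 0 = 3 /\
  (forall n, Nat.divide (3 * kappa n) (kappa (S n))) /\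
  (forall n, 0 < T n) /\
  Nat.divide 3 (T 0) /\
  (forall n, T (S n) = kappa (S n) * T n) /\
  cv_infty (fun n => (INR (kappa (S n)) / INR (kappa n))%R).

Definition regular (T a b : nat) : Prop :=
  exists k, a = k * T /\ b = (k + 1) * T - 1.

Definition component (M : nat -> bool) (a b : nat) : Prop :=
  a <= b /\ (forall x, a <= x <= b -> M x = true) /\
  (a = 0 \/ M (a - 1) = false) /\ M (S b) = false.

Definition adapted (T : nat -> nat) (M : nat -> bool) : Prop :=
  (forall x, M x = true -> exists a b, a <= x <= b /\ component M a b) /\
  (forall a b, component M a b -> exists n, regular (T n) a b).

Definition skeleton (T : nat -> nat) (M : nat -> bool) (n x : nat) : Prop :=
  exists a b, component M a b /\ a <= x <= b /\
    exists k, n <= k /\ regular (T k) a b.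

Definition card_in (P : nat -> Prop) (a b c : nat) : Prop :=
  exists s : list nat, NoDup s /\
    (forall x, In x s <-> (a <= x <= b /\ P x)) /\ length s = c.

Definition sparsely_long_tail (T kappa : nat -> nat) (M : nat -> bool) : Prop :=
  adapted T M /\
  M 0 = false /\
  (forall n, 1 <= n -> forall a b, regular (T n) a b ->
     ~ (forall x, a <= x <= b -> M x = true) ->
     (forall x, a <= x <= b -> skeleton T M (n - 1) x ->
        a + T n / 3 <= x <= b - T n / 3) /\
     exists c, card_in (skeleton T M (n - 1)) a b c /\
       (0 < INR c / INR (T n) <= 1 / INR (kappa n))%R).

Fixpoint countZ (D : Z -> bool) (N : nat) : nat :=
  match N with
  | O => O
  | S N' => countZ D N' + (if D (Z.of_nat N') then 1 else 0)
  end.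

(** the sequence (1/N) #(D ∩ [0,N-1]), indexed by N = n+1 >= 1 *)
Definition dens_seq (D : Z -> bool) (n : nat) : R :=
  (INR (countZ D (S n)) / INR (S n))%R.

Definition is_limsup (u : nat -> R) (l : R) : Prop :=
  forall e, (0 < e)%R ->
    (exists N, forall n, (N <= n)%nat -> (u n < l + e)%R) /\
    (forall N, exists n, (N <= n)%nat /\ (l - e < u n)%R).

Definition upper_density_lt (D : Z -> bool) (eps : R) : Prop :=
  exists l, is_limsup (dens_seq D) l /\ (l < eps)%R.

Definition has_density (D : Z -> bool) (d : R) : Prop :=
  Un_cv (dens_seq D) d.

Definition natZ (A : nat -> bool) : Z -> bool :=
  fun z => andb (0 <=? z)%Z (A (Z.to_nat z)).

(** x ∈ aZ + b  (for a <> 0) *)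
Definition in_AP (a b : nat) (x : Z) : bool :=
  ((x - Z.of_nat b) mod Z.of_nat a =? 0)%Z.

Definition in_union (L : list (nat * nat)) (x : Z) : bool :=
  existsb (fun p => in_AP (fst p) (snd p) x) L.

Definition rationalZ (C : Z -> bool) : Prop :=
  forall eps, (0 < eps)%R ->
    exists L : list (nat * nat), (forall p, In p L -> fst p <> 0) /\
      upper_density_lt (fun x => xorb (C x) (in_union L x)) eps.

Definition rationalN (A : nat -> bool) : Prop :=
  exists C, rationalZ C /\ forall n, A n = C (Z.of_nat n).

(* Main.v *)
Require Import Defs.
From Stdlib Require Import Reals ZArith Arith List Lia Lra Classical.

Definition qq (kappa : nat -> nat) m := kappa (S m) / 3.
Definition Lv (T kappa : nat -> nat) m x : bool :=
  Nat.eqb ((x / T m) mod kappa (S m)) (qq kappa m).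
Definition Rs (T kappa : nat -> nat) x : bool :=
  existsb (fun m => Lv T kappa m x) (seq 0 x).


Lemma divchar t x u : 0 < t -> (x / t = u <-> t*u <= x < t*(u+1)).
Proof.
  intros Ht; split.
  - intros <-. pose proof (Nat.div_mod x t ltac:(lia)).
    pose proof (Nat.mod_upper_bound x t ltac:(lia)). nia.
  - intros Hx. symmetry. apply (Nat.div_unique x t u (x - t*u)); nia.
Qed.

Lemma modchar k u r : r < k -> (exists w, u = k * w + r) -> u mod k = r.
Proof. intros Hr [w ->]. symmetry. apply (Nat.mod_unique _ _ w); lia. Qed.

Lemma sc_kS T kappa (H : is_scale T kappa) m : 3 * kappa m <= kappa (S m).
Proof.
  destruct H as (H0 & H1 & H2 & H3 & H4 & H5).
  apply Nat.divide_pos_le; [|apply H1].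
  specialize (H2 (S m)); rewrite H4 in H2. destruct (kappa (S m)); lia.
Qed.

Lemma sc_kge3 T kappa (H : is_scale T kappa) m : 3 <= kappa m.
Proof.
  induction m. destruct H as (H0 & _); lia.
  pose proof (sc_kS T kappa H m); lia.
Qed.

Lemma sc_k3 T kappa (H : is_scale T kappa) m : kappa (S m) = 3 * qq kappa m.
Proof.
  destruct H as (H0 & H1 & H2 & H3 & H4 & H5).
  destruct (H1 m) as [z Hz]. unfold qq. rewrite Hz.
  replace (z * (3 * kappa m)) with ((z * kappa m) * 3) by lia.
  rewrite Nat.div_mul by lia. lia.
Qed.

Lemma sc_q T kappa (H : is_scale T kappa) m : 3 <= qq kappa m.
Proof.
  pose proof (sc_k3 T kappa H m). pose proof (sc_kS T kappa H m).
  pose proof (sc_kge3 T kappa H m). lia.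
Qed.

Lemma sc_Tpos T kappa (H : is_scale T kappa) m : 0 < T m.
Proof. destruct H as (H0 & H1 & H2 & _). apply H2. Qed.

Lemma sc_TS T kappa (H : is_scale T kappa) m : T (S m) = kappa (S m) * T m.
Proof. destruct H as (H0 & H1 & H2 & H3 & H4 & H5). apply H4. Qed.

Lemma Tmul T kappa (H : is_scale T kappa) j d : exists P, T (d + j) = T j * P /\ 0 < P.
Proof.
  induction d as [|d [P [HP HP0]]].
  - exists 1. simpl. lia.
  - exists (kappa (S (d + j)) * P). simpl. rewrite (sc_TS T kappa H). rewrite HP.
    pose proof (sc_kge3 T kappa H (S (d+j))). split; nia.
Qed.

Lemma Tmul_lt T kappa (H : is_scale T kappa) j m : j < m ->
  exists P, T m = T j * (kappa (S j) * P) /\ 0 < P.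
Proof.
  intros Hjm. destruct (Tmul T kappa H (S j) (m - S j)) as [P [HP HP0]].
  exists P. replace m with (m - S j + S j) by lia. rewrite HP, (sc_TS T kappa H). split; [lia|lia].
Qed.

Lemma Tmul_le T kappa (H : is_scale T kappa) j m : j <= m ->
  exists P, T m = T j * P /\ 0 < P.
Proof.
  intros Hjm. destruct (Tmul T kappa H j (m - j)) as [P [HP HP0]].
  exists P. replace m with (m - j + j) by lia. auto.
Qed.

Lemma T_lt T kappa (H : is_scale T kappa) j m : j < m -> T j < T m.
Proof.
  intros Hjm. destruct (Tmul_lt T kappa H j m Hjm) as [P [HP HP0]].
  pose proof (sc_kge3 T kappa H (S j)). pose proof (sc_Tpos T kappa H j). rewrite HP. assert (1 < kappa (S j) * P) by nia. nia.
Qed.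

Lemma T_inj T kappa (H : is_scale T kappa) j m : T j = T m -> j = m.
Proof.
  intros E. destruct (Nat.lt_trichotomy j m) as [h|[h|h]]; auto;
  [apply (T_lt T kappa H) in h | apply (T_lt T kappa H) in h]; lia.
Qed.

Lemma T_ge T kappa (H : is_scale T kappa) m : m < T m.
Proof.
  induction m. pose proof (sc_Tpos T kappa H 0); lia.
  pose proof (T_lt T kappa H m (S m) ltac:(lia)); lia.
Qed.

Lemma div_lvl y t P : 0 < t -> 0 < P -> y / (t * P) = y / t / P.
Proof. intros; rewrite Nat.Div0.div_div; auto. Qed.

Lemma Lv_same T kappa (H : is_scale T kappa) j m x y : j <= m ->
  x / T j = y / T j -> Lv T kappa m x = Lv T kappa m y.
Proof.
  intros Hjm E. destruct (Tmul_le T kappa H j m Hjm) as [P [HP HP0]].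
  unfold Lv. rewrite HP. pose proof (sc_Tpos T kappa H j).
  rewrite !div_lvl by lia. rewrite E. reflexivity.
Qed.

Lemma Lv_true T kappa (H : is_scale T kappa) m x :
  Lv T kappa m x = true <-> (x / T m) mod kappa (S m) = qq kappa m.
Proof. unfold Lv. apply Nat.eqb_eq. Qed.

Lemma Lv_ge T kappa (H : is_scale T kappa) m x : Lv T kappa m x = true ->
  qq kappa m * T m <= x.
Proof.
  intros E%Lv_true; auto. pose proof (Nat.Div0.mod_le (x / T m) (kappa (S m))).
  pose proof (Nat.mul_div_le x (T m)). pose proof (sc_Tpos T kappa H m). nia.
Qed.

Lemma Lv_bound T kappa (H : is_scale T kappa) m x : Lv T kappa m x = true -> m < x.
Proof.
  intros E. apply Lv_ge in E; auto. pose proof (T_ge T kappa H m).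
  pose proof (sc_q T kappa H m). nia.
Qed.

Lemma Rs_spec T kappa (H : is_scale T kappa) x :
  Rs T kappa x = true <-> exists m, Lv T kappa m x = true.
Proof.
  unfold Rs. rewrite existsb_exists. split.
  - intros [m [_ Hm]]; eauto.
  - intros [m Hm]. exists m. split; auto. apply in_seq.
    apply Lv_bound in Hm; auto. lia.
Qed.

Lemma div_pred_same c P : 0 < P -> ~ Nat.divide P c -> 1 <= c -> (c-1)/P = c/P.
Proof.
  intros HP Hd Hc. pose proof (Nat.div_mod c P ltac:(lia)) as E.
  pose proof (Nat.mod_upper_bound c P ltac:(lia)).
  destruct (c mod P) eqn:Er.
  - exfalso; apply Hd. exists (c/P). lia.
  - symmetry. apply (Nat.div_unique _ _ _ n); lia.
Qed.

Lemma div_succ_same c P : 0 < P -> ~ Nat.divide P (c+1) -> (c+1)/P = c/P.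
Proof.
  intros HP Hd. pose proof (Nat.div_mod c P ltac:(lia)) as E.
  pose proof (Nat.mod_upper_bound c P ltac:(lia)).
  destruct (Nat.eq_dec (c mod P + 1) P).
  - exfalso; apply Hd. exists (c/P + 1). lia.
  - symmetry. apply (Nat.div_unique _ _ _ (c mod P + 1)); lia.
Qed.

Lemma Lv_quot T kappa m x y : x / T m = y / T m -> Lv T kappa m x = Lv T kappa m y.
Proof. unfold Lv. intros ->. reflexivity. Qed.

Lemma Lv_false T kappa m x : (x / T m) mod kappa (S m) <> qq kappa m -> Lv T kappa m x = false.
Proof. unfold Lv. intros. apply Nat.eqb_neq. auto. Qed.

Lemma nodiv T kappa (H : is_scale T kappa) j c P r : c mod kappa (S j) = r -> r <> 0 ->
  ~ Nat.divide (kappa (S j) * P) c.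
Proof.
  intros Hc Hr [w Hw]. apply Hr. rewrite <- Hc. apply modchar.
  pose proof (sc_kge3 T kappa H (S j)); lia. exists (w*P). lia.
Qed.


Lemma left_nb T kappa (H : is_scale T kappa) j x :
  Lv T kappa j x = true -> (forall j', j < j' -> Lv T kappa j' x = false) ->
  1 <= x / T j -> forall m, Lv T kappa m (x / T j * T j - 1) = false.
Proof.
  intros Hj Hmax Hc m. set (c := x / T j) in *.
  pose proof (sc_Tpos T kappa H j) as Tj.
  assert (Ez : (c * T j - 1) / T j = c - 1).
  { apply divchar; nia. }
  pose proof Hj as Hq. apply Lv_true in Hq; auto. fold c in Hq.
  pose proof (sc_k3 T kappa H j) as K3. pose proof (sc_q T kappa H j) as Q3.
  pose proof (Nat.div_mod c (kappa (S j)) ltac:(lia)) as Ec.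
  destruct (Nat.lt_trichotomy j m) as [hjm|[<-|hmj]].
  - rewrite <- (Hmax m hjm). apply Lv_quot.
    destruct (Tmul_lt T kappa H j m hjm) as [P [HP HP0]]. rewrite HP.
    rewrite !(div_lvl _ (T j) (kappa (S j) * P)) by nia. rewrite Ez. fold c. apply div_pred_same; auto. nia.
    apply (nodiv T kappa H j c P (qq kappa j)); auto; lia.
  - apply Lv_false. rewrite Ez. rewrite (modchar _ _ (qq kappa j - 1)). lia. lia.
    exists (c / kappa (S j)). lia.
  - destruct (Tmul_lt T kappa H m j hmj) as [P [HP HP0]].
    pose proof (sc_k3 T kappa H m) as K3m. pose proof (sc_q T kappa H m) as Q3m.
    pose proof (sc_Tpos T kappa H m) as Tm.
    apply Lv_false.
    assert (E2 : (c * T j - 1) / T m = c * kappa (S m) * P - 1).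
    { apply divchar; auto. rewrite HP. split; nia. }
    rewrite E2. rewrite (modchar _ _ (kappa (S m) - 1)). lia. lia.
    exists (c * P - 1). nia.
Qed.

Lemma right_nb T kappa (H : is_scale T kappa) j x :
  Lv T kappa j x = true -> (forall j', j < j' -> Lv T kappa j' x = false) ->
  forall m, Lv T kappa m ((x / T j + 1) * T j) = false.
Proof.
  intros Hj Hmax m. set (c := x / T j) in *.
  pose proof (sc_Tpos T kappa H j) as Tj.
  assert (Ez : ((c + 1) * T j) / T j = c + 1).
  { apply Nat.div_mul. lia. }
  pose proof Hj as Hq. apply Lv_true in Hq; auto. fold c in Hq.
  pose proof (sc_k3 T kappa H j) as K3. pose proof (sc_q T kappa H j) as Q3.
  pose proof (Nat.div_mod c (kappa (S j)) ltac:(lia)) as Ec.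
  assert (Hs : (c+1) mod kappa (S j) = qq kappa j + 1).
  { apply modchar. lia. exists (c / kappa (S j)). lia. }
  destruct (Nat.lt_trichotomy j m) as [hjm|[<-|hmj]].
  - rewrite <- (Hmax m hjm). apply Lv_quot.
    destruct (Tmul_lt T kappa H j m hjm) as [P [HP HP0]]. rewrite HP.
    rewrite !(div_lvl _ (T j) (kappa (S j) * P)) by nia. rewrite Ez. fold c. apply div_succ_same; auto. nia.
    apply (nodiv T kappa H j (c+1) P (qq kappa j + 1)); auto; lia.
  - apply Lv_false. rewrite Ez. lia.
  - destruct (Tmul_lt T kappa H m j hmj) as [P [HP HP0]].
    pose proof (sc_k3 T kappa H m) as K3m. pose proof (sc_q T kappa H m) as Q3m.
    pose proof (sc_Tpos T kappa H m) as Tm.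
    apply Lv_false.
    assert (E2 : ((c + 1) * T j) / T m = (c+1) * kappa (S m) * P).
    { apply divchar; auto. rewrite HP. split; nia. }
    rewrite E2. rewrite (modchar _ _ 0). lia. lia.
    exists ((c+1) * P). nia.
Qed.

Lemma notR T kappa (H : is_scale T kappa) z : (forall m, Lv T kappa m z = false) -> Rs T kappa z = false.
Proof.
  intros Hz. destruct (Rs T kappa z) eqn:E; auto. apply Rs_spec in E; auto.
  destruct E as [m Hm]. rewrite Hz in Hm. discriminate.
Qed.

Lemma compK T kappa (H : is_scale T kappa) j x :
  Lv T kappa j x = true -> (forall j', j < j' -> Lv T kappa j' x = false) ->
  component (Rs T kappa) (x / T j * T j) ((x / T j + 1) * T j - 1).
Proof.
  intros Hj Hmax. pose proof (sc_Tpos T kappa H j) as Tj.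
  split; [nia|split; [|split]].
  - intros y Hy. apply Rs_spec; auto. exists j. rewrite <- Hj. apply Lv_quot.
    apply divchar; auto. nia.
  - destruct (x / T j) eqn:Ec. left; lia. right.
    rewrite <- Ec. apply notR; auto. apply left_nb; auto. lia.
  - replace (S ((x / T j + 1) * T j - 1)) with ((x / T j + 1) * T j) by nia.
    apply notR; auto. apply right_nb; auto.
Qed.

Lemma comp_uniq M a b a' b' x : component M a b -> component M a' b' ->
  a <= x <= b -> a' <= x <= b' -> a = a' /\ b = b'.
Proof.
  intros (h1 & h2 & h3 & h4) (g1 & g2 & g3 & g4) Hx Hx'.
  assert (a = a').
  { destruct (Nat.lt_trichotomy a a') as [l|[e|l]]; auto.
    - destruct g3 as [g3|g3]; [lia|]. rewrite h2 in g3 by lia. discriminate.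
    - destruct h3 as [h3|h3]; [lia|]. rewrite g2 in h3 by lia. discriminate. }
  split; auto.
  destruct (Nat.lt_trichotomy b b') as [l|[e|l]]; auto.
  - rewrite g2 in h4 by lia. discriminate.
  - rewrite h2 in g4 by lia. discriminate.
Qed.

Lemma maxlv T kappa (H : is_scale T kappa) x j : Lv T kappa j x = true ->
  exists j', j <= j' /\ Lv T kappa j' x = true /\ (forall i, j' < i -> Lv T kappa i x = false).
Proof.
  remember (x - j) as d eqn:Ed. revert j Ed.
  induction d as [d IH] using (well_founded_induction lt_wf).
  intros j Ed Hj.
  destruct (classic (exists i, j < i /\ Lv T kappa i x = true)) as [[i [hi Hi]]|hn].
  - pose proof (Lv_bound T kappa H _ _ Hi).
    destruct (IH (x - i) ltac:(lia) i eq_refl Hi) as [j' [h1 [h2 h3]]].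
    exists j'. repeat split; auto. lia.
  - exists j. repeat split; auto. intros i hi. destruct (Lv T kappa i x) eqn:E; auto.
    exfalso; apply hn; eauto.
Qed.

Lemma skel_iff T kappa (H : is_scale T kappa) n x :
  skeleton T (Rs T kappa) n x <-> exists j, n <= j /\ Lv T kappa j x = true.
Proof.
  split.
  - intros (a & b & Hc & Hx & k & hk & Hreg).
    assert (Rx : Rs T kappa x = true) by (apply Hc; lia).
    apply Rs_spec in Rx; auto. destruct Rx as [m Hm].
    destruct (maxlv T kappa H x m Hm) as [j [_ [Hj Hmax]]].
    pose proof (compK T kappa H j x Hj Hmax) as Hc2.
    pose proof (sc_Tpos T kappa H j).
    destruct (comp_uniq _ _ _ _ _ x Hc Hc2 Hx) as [Ea Eb].
    + pose proof (Nat.mul_div_le x (T j)). split. nia.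
      pose proof (Nat.div_mod x (T j)). pose proof (Nat.mod_upper_bound x (T j)). nia.
    + destruct Hreg as [k' [Ha Hb]].
      pose proof (sc_Tpos T kappa H k).
      assert (ETk : T k = T j) by nia. apply (T_inj T kappa H) in ETk. subst. eauto.
  - intros [j [hj Hj]].
    destruct (maxlv T kappa H x j Hj) as [j' [h1 [Hj' Hmax]]].
    pose proof (sc_Tpos T kappa H j').
    exists (x / T j' * T j'), ((x / T j' + 1) * T j' - 1).
    split. apply compK; auto. split.
    + pose proof (Nat.mul_div_le x (T j')). split. nia.
      pose proof (Nat.div_mod x (T j')). pose proof (Nat.mod_upper_bound x (T j')). nia.
    + exists j'. split. lia. exists (x / T j'). split; reflexivity.
Qed.

Lemma slt T kappa (H : is_scale T kappa) : sparsely_long_tail T kappa (Rs T kappa).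
Proof.
  split; [split|split].
  - intros x Rx. apply Rs_spec in Rx; auto. destruct Rx as [m Hm].
    destruct (maxlv T kappa H x m Hm) as [j [_ [Hj Hmax]]].
    pose proof (sc_Tpos T kappa H j).
    exists (x / T j * T j), ((x / T j + 1) * T j - 1). split.
    + pose proof (Nat.mul_div_le x (T j)). split. nia.
      pose proof (Nat.div_mod x (T j)). pose proof (Nat.mod_upper_bound x (T j)). nia.
    + apply compK; auto.
  - intros a b Hc. assert (Ra : Rs T kappa a = true) by (apply Hc; destruct Hc; lia).
    apply Rs_spec in Ra; auto. destruct Ra as [m Hm].
    destruct (maxlv T kappa H a m Hm) as [j [_ [Hj Hmax]]].
    pose proof (compK T kappa H j a Hj Hmax) as Hc2.
    pose proof (sc_Tpos T kappa H j).
    destruct (comp_uniq _ _ _ _ _ a Hc Hc2) as [Ea Eb].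
    + destruct Hc; lia.
    + pose proof (Nat.mul_div_le a (T j)). split. nia.
      pose proof (Nat.div_mod a (T j)). pose proof (Nat.mod_upper_bound a (T j)). nia.
    + exists j, (a / T j). split; auto.
  - apply notR; auto. intros m. apply Lv_false.
    rewrite Nat.Div0.div_0_l, Nat.Div0.mod_0_l. pose proof (sc_q T kappa H m). lia.
  - intros n hn a b [k [Ha Hb]] Hnot.
    destruct n as [|m]; [lia|]. replace (S m - 1) with m by lia.
    pose proof (sc_TS T kappa H m) as TS. pose proof (sc_k3 T kappa H m) as K3.
    pose proof (sc_q T kappa H m) as Q3. pose proof (sc_Tpos T kappa H m) as Tm.
    set (t := T m) in *. set (q := qq kappa m) in *. set (K := kappa (S m)) in *.
    assert (Key : forall x, a <= x <= b -> (skeleton T (Rs T kappa) m x <-> x / t = k * K + q)).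
    { intros x Hx.
      assert (E1 : forall y, a <= y <= b -> y / T (S m) = k).
      { intros y Hy. apply divchar. nia. rewrite TS. nia. }
      assert (E2 : x / t / K = k).
      { rewrite <- div_lvl by lia. rewrite <- (E1 x Hx). f_equal. rewrite TS. lia. }
      rewrite skel_iff by auto. split.
      - intros [j [hj Hj]]. destruct (Nat.eq_dec j m) as [->|hne].
        + apply Lv_true in Hj; auto. fold t K q in Hj.
          pose proof (Nat.div_mod (x / t) K ltac:(lia)). rewrite Hj, E2 in H0. lia.
        + exfalso. apply Hnot. intros y Hy. apply Rs_spec; auto. exists j.
          rewrite <- Hj. apply (Lv_same T kappa H (S m)). lia.
          rewrite (E1 x Hx), (E1 y Hy). reflexivity.
      - intros Ex. exists m. split; auto. apply Lv_true; auto. fold t K q.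
        rewrite Ex. apply modchar. lia. exists k. lia. }
    assert (T3 : T (S m) / 3 = q * t).
    { rewrite TS, K3. replace (3 * q * t) with (q * t * 3) by lia. apply Nat.div_mul. lia. }
    split.
    + intros x Hx Hs. apply (Key x Hx) in Hs. apply divchar in Hs; auto. rewrite T3.
      rewrite TS in Ha, Hb. subst a b. rewrite K3 in *. nia.
    + exists t. split.
      * exists (seq (t * (k * K + q)) t). split; [apply seq_NoDup|split; [|apply length_seq]].
        intros x. rewrite in_seq. split.
        -- intros Hx. assert (Hab : a <= x <= b) by (rewrite TS in Ha, Hb; subst a b; rewrite K3 in *; nia).
           split; auto. apply (Key x Hab). apply divchar; auto. lia.
        -- intros [Hab Hs]. apply (Key x Hab) in Hs. apply divchar in Hs; auto. lia.
      * rewrite TS, mult_INR. assert (0 < INR t)%R by (apply lt_0_INR; lia).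
        assert (0 < INR K)%R by (apply lt_0_INR; lia).
        replace (INR t / (INR K * INR t))%R with (1 / INR K)%R by (field; lra).
        split. apply Rdiv_lt_0_compat; lra. lra.
Qed.

Local Open Scope R_scope.

Lemma div_le_iff a b c : 0 < b -> (a / b <= c <-> a <= c * b).
Proof.
  intros Hb. assert (E : a = (a / b) * b) by (field; lra). split; intros h.
  - rewrite E. apply Rmult_le_compat_r; lra.
  - apply (Rmult_le_reg_r b); auto. rewrite <- E. lra.
Qed.

Lemma div_ge_iff a b c : 0 < b -> (c <= a / b <-> c * b <= a).
Proof.
  intros Hb. assert (E : a = (a / b) * b) by (field; lra). split; intros h.
  - rewrite E. apply Rmult_le_compat_r; lra.
  - apply (Rmult_le_reg_r b); auto. rewrite <- E. lra.
Qed.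

Lemma div_lt_iff a b c : 0 < b -> (a / b < c <-> a < c * b).
Proof.
  intros Hb. assert (E : a = (a / b) * b) by (field; lra). split; intros h.
  - rewrite E. apply Rmult_lt_compat_r; lra.
  - apply (Rmult_lt_reg_r b); auto. rewrite <- E. lra.
Qed.

Lemma cv_le_const u l c : Un_cv u l -> (forall n, u n <= c) -> l <= c.
Proof.
  intros Hu Hc. destruct (Rle_dec l c) as [h|h]; auto. exfalso.
  destruct (Hu (l - c)) as [N HN]. lra. specialize (HN N (le_n _)). specialize (Hc N).
  unfold Rdist in HN. apply Rabs_def2 in HN. lra.
Qed.

Lemma cv_ge_const u l c : Un_cv u l -> (forall n, c <= u n) -> c <= l.
Proof.
  intros Hu Hc. destruct (Rle_dec c l) as [h|h]; auto. exfalso.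
  destruct (Hu (c - l)) as [N HN]. lra. specialize (HN N (le_n _)). specialize (Hc N).
  unfold Rdist in HN. apply Rabs_def2 in HN. lra.
Qed.

Lemma cv_limsup u l : Un_cv u l -> is_limsup u l.
Proof.
  intros Hu e He. destruct (Hu e He) as [N HN]. split.
  - exists N. intros n hn. specialize (HN n hn). unfold Rdist in HN. apply Rabs_def2 in HN. lra.
  - intros M. exists (max M N). split. lia. specialize (HN (max M N) ltac:(lia)).
    unfold Rdist in HN. apply Rabs_def2 in HN. lra.
Qed.

Local Close Scope R_scope.
Open Scope bool_scope.
Open Scope nat_scope.

Fixpoint cnt (f : nat -> bool) N : nat :=
  match N with 0 => 0 | S N' => cnt f N' + (if f N' then 1 else 0) end.

Lemma countZ_cnt D N : countZ D N = cnt (fun n => D (Z.of_nat n)) N.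
Proof. induction N; simpl; auto. Qed.

Definition dens f n := (INR (cnt f (S n)) / INR (S n))%R.

Lemma cnt_ext f g N : (forall x, x < N -> f x = g x) -> cnt f N = cnt g N.
Proof. induction N; simpl; intros; auto. rewrite IHN by auto. rewrite H by lia. auto. Qed.

Lemma cnt_mono f g N : (forall x, x < N -> f x = true -> g x = true) -> cnt f N <= cnt g N.
Proof.
  induction N; simpl; intros; auto. specialize (IHN ltac:(auto)).
  specialize (H N ltac:(lia)). destruct (f N) eqn:E1, (g N); try lia.
Qed.

Lemma cnt_le f N : cnt f N <= N.
Proof. induction N; simpl; auto. destruct (f N); lia. Qed.

Lemma cnt_monoN f N M : N <= M -> cnt f N <= cnt f M.
Proof. induction 1; simpl; auto. destruct (f m); lia. Qed.

Lemma cnt_or f g N : cnt (fun x => f x || g x) N <= cnt f N + cnt g N.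
Proof. induction N; simpl; auto. destruct (f N), (g N); simpl; lia. Qed.

Lemma cnt_split f g N : cnt f N = cnt (fun x => f x && g x) N + cnt (fun x => f x && negb (g x)) N.
Proof. induction N; simpl; auto. destruct (f N), (g N); simpl; lia. Qed.

Lemma cnt_add f N M : cnt f (N + M) = cnt f N + cnt (fun x => f (N + x)) M.
Proof. induction M; simpl. rewrite Nat.add_0_r; lia. rewrite Nat.add_succ_r. simpl. rewrite IHM. lia. Qed.

Lemma cnt_false N : cnt (fun _ => false) N = 0.
Proof. induction N; simpl; auto. rewrite IHN; auto. Qed.

Lemma cnt_per f P : (forall x, f (x + P) = f x) -> forall q r, cnt f (q * P + r) = q * cnt f P + cnt f r.
Proof.
  intros Hf q r. induction q. simpl; auto.
  replace (S q * P + r) with (P + (q * P + r)) by lia. rewrite cnt_add.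
  rewrite (cnt_ext (fun x => f (P + x)) f). rewrite IHq. lia.
  intros x _. rewrite Nat.add_comm. auto.
Qed.

Lemma cnt_pos f N x : x < N -> f x = true -> 1 <= cnt f N.
Proof.
  intros h Hf. pose proof (cnt_monoN f (S x) N h). simpl in H. rewrite Hf in H. lia.
Qed.

Lemma cnt_int lo hi N : lo <= hi ->
  cnt (fun x => (lo <=? x) && (x <? hi)) N = Nat.min N hi - Nat.min N lo.
Proof.
  intros h. induction N. simpl; auto. cbn [cnt]. rewrite IHN.
  destruct (Nat.leb_spec lo N), (Nat.ltb_spec N hi); cbv beta iota delta [andb]; lia.
Qed.

Lemma per_cv f P : 0 < P -> (forall x, f (x + P) = f x) ->
  Un_cv (dens f) (INR (cnt f P) / INR P).
Proof.
  intros HP Hf.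
  assert (Hb : forall N, cnt f N * P <= N * cnt f P + P * P /\ N * cnt f P <= cnt f N * P + P * P).
  { intros N. pose proof (Nat.div_mod N P ltac:(lia)) as E.
    pose proof (Nat.mod_upper_bound N P ltac:(lia)).
    assert (C : cnt f N = N / P * cnt f P + cnt f (N mod P)) by (rewrite <- (cnt_per f P Hf); f_equal; lia). rewrite C.
    pose proof (cnt_le f P). pose proof (cnt_le f (N mod P)). nia. }
  intros eps Heps.
  destruct (INR_archimed eps (INR P) Heps) as [N0 HN0].
  exists N0. intros n hn. unfold Rdist, dens.
  destruct (Hb (S n)) as [h1 h2].
  apply le_INR in h1, h2. rewrite !plus_INR, !mult_INR in h1, h2.
  set (A := INR (cnt f (S n))) in *. set (c := INR (cnt f P)) in *.
  set (Nn := INR (S n)) in *. set (p := INR P) in *.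
  assert (Hp : (0 < p)%R) by (apply lt_0_INR; lia).
  assert (HN : (0 < Nn)%R) by (apply lt_0_INR; lia).
  assert (HNn : (INR N0 <= Nn)%R) by (apply le_INR; lia).
  assert (E : (A / Nn - c / p = (A * p - Nn * c) / (Nn * p))%R) by (field; lra).
  assert (H1 : (p < Nn * eps)%R) by nra.
  assert (H2 : (p * p < eps * (Nn * p))%R) by nra.
  assert (H3 : (0 < Nn * p)%R) by nra.
  rewrite E. apply Rabs_def1.
  - apply div_lt_iff; lra.
  - assert (H4 : ((Nn * c - A * p) / (Nn * p) < eps)%R) by (apply div_lt_iff; lra).
    replace ((A * p - Nn * c) / (Nn * p))%R with (- ((Nn * c - A * p) / (Nn * p)))%R by (field; lra).
    lra.
Qed.
Open Scope nat_scope.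

Lemma Lv_per T kappa (H : is_scale T kappa) m x w :
  Lv T kappa m (x + w * T (S m)) = Lv T kappa m x.
Proof.
  unfold Lv. rewrite (sc_TS T kappa H). pose proof (sc_Tpos T kappa H m).
  pose proof (sc_kge3 T kappa H (S m)).
  replace (w * (kappa (S m) * T m)) with ((w * kappa (S m)) * T m) by lia.
  rewrite Nat.div_add by lia. rewrite Nat.Div0.mod_add. reflexivity.
Qed.

Lemma cnt_Lv_period T kappa (H : is_scale T kappa) m : cnt (Lv T kappa m) (T (S m)) = T m.
Proof.
  pose proof (sc_TS T kappa H m) as TS. pose proof (sc_k3 T kappa H m) as K3.
  pose proof (sc_q T kappa H m) as Q3. pose proof (sc_Tpos T kappa H m) as Tm.
  rewrite (cnt_ext _ (fun x => (qq kappa m * T m <=? x) && (x <? (qq kappa m + 1) * T m))).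
  - rewrite cnt_int by nia. rewrite TS, K3. nia.
  - intros x hx. unfold Lv. rewrite Nat.mod_small.
    2:{ apply Nat.Div0.div_lt_upper_bound. rewrite TS in hx. nia. }
    apply Bool.eq_iff_eq_true. rewrite Nat.eqb_eq, Bool.andb_true_iff, Nat.leb_le, Nat.ltb_lt.
    rewrite divchar by lia. split; intros; nia.
Qed.

Lemma cnt_Lv_bound T kappa (H : is_scale T kappa) m N : cnt (Lv T kappa m) N * kappa (S m) <= 4 * N.
Proof.
  pose proof (sc_TS T kappa H m) as TS. pose proof (sc_k3 T kappa H m) as K3.
  pose proof (sc_q T kappa H m) as Q3. pose proof (sc_Tpos T kappa H m) as Tm.
  destruct (Nat.le_gt_cases N (qq kappa m * T m)) as [hN|hN].
  - rewrite (cnt_ext _ (fun _ => false)). rewrite cnt_false. lia.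
    intros x hx. destruct (Lv T kappa m x) eqn:E; auto. apply Lv_ge in E; auto. lia.
  - set (P := T (S m)).
    assert (HP : 0 < P) by (unfold P; nia).
    pose proof (cnt_monoN (Lv T kappa m) N ((N / P + 1) * P + 0)) as Hm.
    rewrite cnt_per in Hm. 2:{ intros x. unfold P. rewrite <- (Lv_per T kappa H m x 1). f_equal. lia. }
    simpl in Hm. unfold P in Hm at 2. rewrite cnt_Lv_period in Hm by auto.
    assert (N < (N / P + 1) * P) by (pose proof (Nat.div_mod N P ltac:(lia)); pose proof (Nat.mod_upper_bound N P ltac:(lia)); nia).
    specialize (Hm ltac:(lia)).
    pose proof (Nat.mul_div_le N P). unfold P in *. rewrite TS in *. nia.
Qed.

Definition Pk T kappa k x := existsb (fun m => Lv T kappa m x) (seq 0 k).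

Lemma existsb_ext_in {A} (f g : A -> bool) l : (forall a, In a l -> f a = g a) -> existsb f l = existsb g l.
Proof. induction l; simpl; intros; auto. rewrite H by auto. rewrite IHl; auto. Qed.

Lemma Pk_per T kappa (H : is_scale T kappa) k x : Pk T kappa k (x + T k) = Pk T kappa k x.
Proof.
  unfold Pk. apply existsb_ext_in. intros m Hm. apply in_seq in Hm.
  destruct (Tmul_le T kappa H (S m) k ltac:(lia)) as [P [HP _]].
  rewrite HP, Nat.mul_comm. apply Lv_per; auto.
Qed.

Lemma Pk_R T kappa (H : is_scale T kappa) k x : Pk T kappa k x = true -> Rs T kappa x = true.
Proof.
  unfold Pk. rewrite existsb_exists. intros [m [_ Hm]]. apply Rs_spec; eauto.
Qed.

Definition U T kappa k j x := existsb (fun i => Lv T kappa (k + i) x) (seq 0 j).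

Lemma U_step T kappa k j N : cnt (U T kappa k (S j)) N <= cnt (U T kappa k j) N + cnt (Lv T kappa (k + j)) N.
Proof.
  rewrite (cnt_ext _ (fun x => U T kappa k j x || Lv T kappa (k + j) x)). apply cnt_or.
  intros x _. unfold U. rewrite seq_S, existsb_app. simpl. rewrite Bool.orb_false_r. reflexivity.
Qed.

Lemma U_bound T kappa (H : is_scale T kappa) k N j :
  (INR (cnt (U T kappa k j) N) <= 6 * INR N * (1 / INR (kappa (S k)) - 1 / INR (kappa (S (k + j)))))%R.
Proof.
  induction j.
  - unfold U. simpl. rewrite cnt_false, Nat.add_0_r. simpl. lra.
  - pose proof (U_step T kappa k j N) as Hs. apply le_INR in Hs. rewrite plus_INR in Hs.
    pose proof (cnt_Lv_bound T kappa H (k + j) N) as Hb. apply le_INR in Hb.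
    rewrite mult_INR in Hb. rewrite mult_INR in Hb. simpl (INR 4) in Hb.
    pose proof (sc_kS T kappa H (S (k + j))) as K. apply le_INR in K. rewrite mult_INR in K.
    pose proof (sc_kge3 T kappa H (S (k + j))) as K0. apply le_INR in K0.
    replace (k + S j) with (S (k + j)) by lia.
    set (a := INR (kappa (S (k + j)))) in *. set (b := INR (kappa (S (S (k + j))))) in *.
    set (Y := INR (cnt (Lv T kappa (k + j)) N)) in *.
    set (X := INR (cnt (U T kappa k j) N)) in *.
    set (NN := INR N) in *. simpl (INR 3) in *.
    assert (HN : (0 <= NN)%R) by apply pos_INR.
    assert (Ha : (0 < a)%R) by lra. assert (Hb' : (0 < b)%R) by lra.
    assert (HY : (Y <= 4 * NN * (1 / a))%R).
    { apply (Rmult_le_reg_r a); auto. replace (4 * NN * (1 / a) * a)%R with (4 * NN)%R by (field; lra). lra. }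
    assert (Hab : (1 / b <= (1 / a) / 3)%R).
    { apply Rmult_le_reg_r with (r := (3 * a * b)%R). nra.
      replace (1 / b * (3 * a * b))%R with (3 * a)%R by (field; lra).
      replace (1 / a / 3 * (3 * a * b))%R with b by (field; lra). lra. }
    assert (NN * (1/b) <= NN * ((1/a)/3))%R by (apply Rmult_le_compat_l; auto).
    lra.
Qed.

Lemma tail_bound T kappa (H : is_scale T kappa) k N :
  (INR (cnt (fun x => Rs T kappa x && negb (Pk T kappa k x)) N) <= 6 * INR N / INR (kappa (S k)))%R.
Proof.
  eapply Rle_trans. apply le_INR. apply (cnt_mono _ (U T kappa k N)).
  - intros x hx Hx. apply Bool.andb_true_iff in Hx. destruct Hx as [Rx Px].
    apply Rs_spec in Rx; auto. destruct Rx as [m Hm].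
    assert (k <= m).
    { destruct (Nat.le_gt_cases k m); auto. exfalso. unfold Pk in Px.
      assert (existsb (fun m0 => Lv T kappa m0 x) (seq 0 k) = true).
      { apply existsb_exists. exists m. split; auto. apply in_seq. lia. }
      rewrite H1 in Px. discriminate. }
    pose proof (Lv_bound T kappa H _ _ Hm).
    unfold U. apply existsb_exists. exists (m - k). split. apply in_seq; lia.
    replace (k + (m - k)) with m by lia. auto.
  - eapply Rle_trans. apply U_bound; auto.
    pose proof (sc_kge3 T kappa H (S (k + N))) as K0. apply le_INR in K0.
    pose proof (sc_kge3 T kappa H (S k)) as K1. apply le_INR in K1. simpl (INR 3) in *.
    assert (HN : (0 <= INR N)%R) by apply pos_INR.
    assert (0 <= 1 / INR (kappa (S (k + N))))%R.
    { unfold Rdiv. rewrite Rmult_1_l. left. apply Rinv_0_lt_compat. lra. }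
    assert (0 <= INR N * (1 / INR (kappa (S (k + N)))))%R by (apply Rmult_le_pos; auto).
    replace (6 * INR N / INR (kappa (S k)))%R with (6 * INR N * (1 / INR (kappa (S k))))%R by (field; lra).
    lra.
Qed.

Lemma sandwich T kappa (H : is_scale T kappa) k N :
  cnt (Rs T kappa) N = cnt (Pk T kappa k) N + cnt (fun x => Rs T kappa x && negb (Pk T kappa k x)) N.
Proof.
  rewrite (cnt_split (Rs T kappa) (Pk T kappa k)). f_equal. apply cnt_ext.
  intros x _. destruct (Pk T kappa k x) eqn:E. rewrite (Pk_R T kappa H k x E). auto.
  apply Bool.andb_false_r.
Qed.
Open Scope nat_scope.

Lemma kappa_ge T kappa (H : is_scale T kappa) m : m + 3 <= kappa m.
Proof.
  induction m. pose proof (sc_kge3 T kappa H 0); lia.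
  pose proof (sc_kS T kappa H m); lia.
Qed.

Lemma eps_k T kappa (H : is_scale T kappa) e : (0 < e)%R -> exists k, (6 / INR (kappa (S k)) < e)%R.
Proof.
  intros He. destruct (INR_archimed e 6 He) as [k Hk]. exists k.
  pose proof (kappa_ge T kappa H (S k)) as K. apply le_INR in K.
  assert (INR k <= INR (kappa (S k)))%R by (eapply Rle_trans; [|exact K]; apply le_INR; lia).
  assert (0 < INR (kappa (S k)))%R by (apply lt_0_INR; pose proof (kappa_ge T kappa H (S k)); lia).
  apply div_lt_iff; auto. nra.
Qed.

Lemma dens_bounds T kappa (H : is_scale T kappa) k n :
  (dens (Pk T kappa k) n <= dens (Rs T kappa) n <= dens (Pk T kappa k) n + 6 / INR (kappa (S k)))%R.
Proof.
  unfold dens. rewrite (sandwich T kappa H k), plus_INR.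
  pose proof (tail_bound T kappa H k (S n)) as Hb.
  set (A := INR (cnt (Pk T kappa k) (S n))). set (B := INR (cnt _ (S n))) in *.
  assert (0 <= B)%R by apply pos_INR.
  assert (HN : (0 < INR (S n))%R) by (apply lt_0_INR; lia).
  pose proof (sc_kge3 T kappa H (S k)) as K0. apply le_INR in K0. simpl (INR 3) in K0.
  split.
  - unfold Rdiv. apply Rmult_le_compat_r. left; apply Rinv_0_lt_compat; auto. lra.
  - replace ((A + B) / INR (S n))%R with (A / INR (S n) + B / INR (S n))%R by (field; lra).
    assert (B / INR (S n) <= 6 / INR (kappa (S k)))%R.
    { apply div_le_iff; auto. replace (6 / INR (kappa (S k)) * INR (S n))%R with (6 * INR (S n) / INR (kappa (S k)))%R by (field; lra). auto. }
    lra.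
Qed.

Lemma Pk_cv T kappa (H : is_scale T kappa) k :
  Un_cv (dens (Pk T kappa k)) (INR (cnt (Pk T kappa k) (T k)) / INR (T k)).
Proof. apply per_cv. apply (sc_Tpos T kappa H). intros; apply Pk_per; auto. Qed.

Lemma R_cauchy T kappa (H : is_scale T kappa) : Cauchy_crit (dens (Rs T kappa)).
Proof.
  intros e He. destruct (eps_k T kappa H (e/3)%R ltac:(lra)) as [k Hk].
  destruct (Pk_cv T kappa H k (e/6)%R ltac:(lra)) as [N HN].
  exists N. intros n m hn hm. unfold Rdist.
  pose proof (HN n hn) as h1. pose proof (HN m hm) as h2. unfold Rdist in h1, h2.
  apply Rabs_def2 in h1, h2.
  pose proof (dens_bounds T kappa H k n). pose proof (dens_bounds T kappa H k m).
  apply Rabs_def1; lra.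
Qed.

Lemma Pk_mult T kappa (H : is_scale T kappa) k y w : Pk T kappa k (y + w * T k) = Pk T kappa k y.
Proof.
  induction w. simpl. rewrite Nat.add_0_r. auto.
  replace (y + S w * T k) with ((y + w * T k) + T k) by lia. rewrite Pk_per; auto.
Qed.

Lemma apAP P r x : 0 < P -> r < P -> (in_AP P r (Z.of_nat x) = true <-> x mod P = r).
Proof.
  intros HP hr. unfold in_AP. rewrite Z.eqb_eq.
  pose proof (Nat.div_mod x P ltac:(lia)) as E.
  pose proof (Nat.mod_upper_bound x P ltac:(lia)).
  assert (EZ : (Z.of_nat x - Z.of_nat r = (Z.of_nat (x mod P) - Z.of_nat r) + Z.of_nat (x / P) * Z.of_nat P)%Z).
  { rewrite E at 1. rewrite Nat2Z.inj_add, Nat2Z.inj_mul. lia. }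
  rewrite EZ, Z.mod_add by lia. split.
  - intros h. apply Z.mod_divide in h; [|lia]. destruct h as [w Hw]. remember (x mod P) as s. clear E EZ Heqs. destruct (Z.lt_trichotomy w 0) as [hw|[hw|hw]]; [nia| subst; lia | nia].
  - intros <-. rewrite Z.sub_diag. apply Z.mod_0_l. lia.
Qed.

Definition Lst T kappa k := map (fun r => (T k, r)) (filter (Pk T kappa k) (seq 0 (T k))).

Lemma in_union_Pk T kappa (H : is_scale T kappa) k x :
  in_union (Lst T kappa k) (Z.of_nat x) = Pk T kappa k x.
Proof.
  pose proof (sc_Tpos T kappa H k) as Tk.
  assert (Ex : Pk T kappa k x = Pk T kappa k (x mod T k)).
  { rewrite (Nat.div_mod x (T k)) at 1 by lia. rewrite Nat.add_comm, Nat.mul_comm. apply Pk_mult; auto. }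
  apply Bool.eq_iff_eq_true. unfold in_union. rewrite existsb_exists. split.
  - intros [p [Hp Hap]]. unfold Lst in Hp. apply in_map_iff in Hp. destruct Hp as [r [<- Hr]].
    apply filter_In in Hr. destruct Hr as [Hr Pr]. apply in_seq in Hr. simpl in Hap.
    apply apAP in Hap; try lia. rewrite Ex, Hap. auto.
  - intros Px. exists (T k, x mod T k). split.
    + unfold Lst. apply in_map_iff. exists (x mod T k). split; auto. apply filter_In. split.
      apply in_seq. pose proof (Nat.mod_upper_bound x (T k)); lia. rewrite <- Ex; auto.
    + simpl. apply apAP; auto. apply Nat.mod_upper_bound; lia.
Qed.

Lemma natZ_nat (A : nat -> bool) n : natZ A (Z.of_nat n) = A n.
Proof. unfold natZ. rewrite Nat2Z.id. replace (0 <=? Z.of_nat n)%Z with true. auto. symmetry. apply Z.leb_le. lia. Qed.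

Theorem proposition6 (T kappa : nat -> nat) :
  is_scale T kappa ->
  exists Rinf : nat -> bool,
    rationalN Rinf /\ sparsely_long_tail T kappa Rinf /\
    exists d, has_density (natZ Rinf) d /\ (0 < d < 1)%R.
Proof.
  intros H. exists (Rs T kappa).
  destruct (R_complete _ (R_cauchy T kappa H)) as [d Hd].
  assert (Hds : forall D, (forall x, D (Z.of_nat x) = Rs T kappa x) -> Un_cv (dens_seq D) d).
  { intros D HD. unfold dens_seq. intros e He. destruct (Hd e He) as [N HN]. exists N.
    intros n hn. rewrite countZ_cnt. rewrite (cnt_ext _ (Rs T kappa)). apply HN; auto.
    intros; apply HD. }
  split; [|split].
  - exists (natZ (Rs T kappa)). split.
    2:{ intros n. symmetry; apply natZ_nat. }
    intros e He. destruct (eps_k T kappa H e He) as [k Hk].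
    exists (Lst T kappa k). split.
    { intros p Hp. unfold Lst in Hp. apply in_map_iff in Hp. destruct Hp as [r [<- _]].
      simpl. pose proof (sc_Tpos T kappa H k). lia. }
    set (dk := (INR (cnt (Pk T kappa k) (T k)) / INR (T k))%R).
    exists (d - dk)%R. split.
    + apply cv_limsup. intros e' He'.
      destruct (CV_minus _ _ _ _ Hd (Pk_cv T kappa H k) e' He') as [N HN]. exists N.
      intros n hn. specialize (HN n hn). unfold dens_seq. rewrite countZ_cnt.
      rewrite (cnt_ext _ (fun x => Rs T kappa x && negb (Pk T kappa k x))).
      * replace (INR (cnt (fun x => Rs T kappa x && negb (Pk T kappa k x)) (S n)) / INR (S n))%R
          with (dens (Rs T kappa) n - dens (Pk T kappa k) n)%R; auto.
        unfold dens. rewrite (sandwich T kappa H k), plus_INR. field. apply not_0_INR. lia.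
      * intros x _. rewrite natZ_nat, in_union_Pk by auto.
        destruct (Pk T kappa k x) eqn:E. rewrite (Pk_R T kappa H k x E). auto.
        destruct (Rs T kappa x); auto.
    + assert (d - dk <= 6 / INR (kappa (S k)))%R.
      { apply (cv_le_const (fun n => dens (Rs T kappa) n - dens (Pk T kappa k) n)%R).
        apply CV_minus; auto. apply Pk_cv; auto.
        intros n. pose proof (dens_bounds T kappa H k n). lra. }
      lra.
  - apply slt; auto.
  - exists d. split.
    + apply Hds. intros; apply natZ_nat.
    + split.
      * set (d1 := (INR (cnt (Pk T kappa 1%nat) (T 1%nat)) / INR (T 1%nat))%R).
        assert (d1 <= d)%R.
        { eapply Rle_cv_lim; [intro n; exact (proj1 (dens_bounds T kappa H 1%nat n)) | apply Pk_cv; auto | exact Hd]. }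
        assert (0 < d1)%R.
        { unfold d1. pose proof (sc_Tpos T kappa H 1%nat). apply Rdiv_lt_0_compat; [|apply lt_0_INR; lia].
          apply lt_0_INR. eapply Nat.lt_le_trans; [|apply (cnt_pos _ _ (qq kappa 0 * T 0))]. lia.
          - rewrite (sc_TS T kappa H 0), (sc_k3 T kappa H 0). pose proof (sc_Tpos T kappa H 0). pose proof (sc_q T kappa H 0). nia.
          - unfold Pk. simpl. rewrite Bool.orb_false_r. apply Lv_true; auto.
            pose proof (sc_Tpos T kappa H 0). rewrite Nat.div_mul by lia. apply Nat.mod_small.
            rewrite (sc_k3 T kappa H 0). pose proof (sc_q T kappa H 0). lia. }
        lra.
      * assert (d <= 6 / INR (kappa 1%nat))%R.
        { apply (cv_le_const (dens (Rs T kappa))); auto. intros n.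
          pose proof (dens_bounds T kappa H 0%nat n).
          assert (dens (Pk T kappa 0%nat) n = 0)%R.
          { unfold dens, Pk. simpl. rewrite cnt_false. simpl. unfold Rdiv. lra. }
          lra. }
        pose proof (sc_kS T kappa H 0%nat) as K. pose proof (sc_kge3 T kappa H 0).
        assert (9 <= kappa 1) by lia. apply le_INR in H2.
        assert (6 / INR (kappa 1%nat) <= 6 / 9)%R.
        { apply div_le_iff. simpl in H2. lra. simpl in H2. apply (Rle_trans _ (6 / 9 * 9)). lra.
          apply Rmult_le_compat_l; lra. }
        lra.
Qed.
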